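(* Let $\Gamma$ be a connected finite hyperbolic oriented graph embedded in a Riemann surface $S$ with boundary, and let $C$ be a simple closed path of $\Gamma$. Let $\pi:\widetilde S\to S$ be the cutting surgery along $C$. Then $\pi^{-1}(\Gamma)$ is a finite hyperbolic graph.
   Context: A Riemann surface with boundary is a compact oriented surface possibly with boundary. An oriented graph has head/tail maps $h,t:E\to V$; it is hyperbolic if at each vertex the incident edges alternate, cyclically around the vertex, between incoming and outgoing. A simple closed path is a closed sequence of consecutive edges without self-intersection; it is a simple closed curve in $S$. Cutting surgery along a simple closed curve $C$ in $\mathrm{Int}(S)$: with a collar $C\times(-\epsilon,\epsilon)$, $\widetilde S=(S\setminus C)\sqcup C_1\sqcup C_2$, copies $C_1,C_2$ of $C$ attached as boundaries of $C\times(-\epsilon,0)$ and $C\times(0,\epsilon)$; $\pi$ is the identity on $S\setminus C$ and identifies $C_i$ with $C$. $\pi^{-1}(\Gamma)$ carries the graph structure whose vertices and edges are the preimages of vertices and edges of $\Gamma$, with orientations pulled back. *)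

(* Defs.v *)
From mathcomp Require Import all_boot.

Set Implicit Arguments.
Unset Strict Implicit.
Unset Printing Implicit Defensive.

(* A dart (half-edge) of an oriented graph with edge set E is a pair (e, b):
   b = true  : the end of e at its head  h e  (e is INCOMING there),
   b = false : the end of e at its tail  t e  (e is OUTGOING there). *)

Section Graph.
Variables (V E : finType) (h t : E -> V).

Definition dvert (d : E * bool) : V := if d.2 then h d.1 else t d.1.

(* A rotation system: the cyclic order (given by the orientation of the
   surface) of the darts around each vertex.  [r d] is the next dart after
   [d] around the vertex [dvert d]; the darts at each vertex form exactly one
   [r]-cycle. *)
Definition is_rotation (r : E * bool -> E * bool) : Prop :=
  [/\ injective r,
      forall d, dvert (r d) = dvert d &
      forall d d', dvert d = dvert d' -> fconnect r d d'].

Definition adjacent : rel V :=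
  fun x y => [exists e, ((t e == x) && (h e == y)) || ((h e == x) && (t e == y))].
Definition connected : Prop := forall x y, connect adjacent x y.

Definition simple_closed_path (c : seq E) : Prop :=
  [/\ c != [::], cycle (fun e f => h e == t f) c & uniq (map t c)].

End Graph.

(* hyperbolic: consecutive darts around every vertex alternate between
   incoming and outgoing *)
Definition hyperbolic (E : Type) (r : E * bool -> E * bool) : Prop :=
  forall d, (r d).2 = ~~ d.2.

Lemma andb_imply_l (a b : bool) : (a && b) ==> a.
Proof. by case: a; case: b. Qed.

Section Cut.
Variables (V E : finType) (h t : E -> V) (rot : E * bool -> E * bool)
          (c : seq E).

Definition onC (v : V) : bool := v \in map t c.

Definition firstC (d : E * bool) : E * bool :=
  head d [seq y <- traject rot (rot d) #|{: E * bool}| | y.1 \in c].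

(* side (true = left copy C_1, false = right copy C_2) of the preimage of the
   dart d: for a dart of C it is the copy bit s; for another dart at a
   vertex v of C it is true iff d lies strictly between the outgoing and the
   incoming C-dart at v (i.e. the next C-dart after d is incoming). *)
Definition dside (d : E * bool) (s : bool) : bool :=
  if d.1 \in c then s else (firstC d).2.

(* vertices of π^{-1}(Γ): (v,false) for every v, plus (v,true) for v on C *)
Definition cutV := {x : V * bool | x.2 ==> onC x.1}.
(* edges of π^{-1}(Γ): (e,false) for every e, plus (e,true) for e on C *)
Definition cutE := {x : E * bool | x.2 ==> (x.1 \in c)}.

Definition mkV (v : V) (s : bool) : cutV :=
  exist _ (v, onC v && s) (andb_imply_l (onC v) s).
Definition mkE (e : E) (s : bool) : cutE :=
  exist _ (e, (e \in c) && s) (andb_imply_l (e \in c) s).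

Definition cut_head (x : cutE) : cutV :=
  mkV (h (val x).1) (dside ((val x).1, true) (val x).2).
Definition cut_tail (x : cutE) : cutV :=
  mkV (t (val x).1) (dside ((val x).1, false) (val x).2).

(* rotation of π^{-1}(Γ) induced by the orientation of the cut surface:
   around a copy of a vertex of C, the darts of that side in the order of
   rot, closed up across the boundary curve (from the copy of the incoming
   C-dart to the copy of the outgoing one on the left side, and conversely
   on the right side). *)
Definition cut_rot (d : cutE * bool) : cutE * bool :=
  let x := ((val d.1).1, d.2) in
  let s := dside x (val d.1).2 in
  let y := if (x.1 \in c) && (x.2 == s) then firstC x else rot x in
  (mkE y.1 s, y.2).

End Cut.


Arguments cut_rot {E} rot c d.
Arguments cut_head {V E} h t rot c x.
Arguments cut_tail {V E} t rot c x.

(* Main.v *)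
Require Import Defs.
From mathcomp Require Import all_boot.
Set Implicit Arguments. Unset Strict Implicit.

Section Nxt.
Variables (T : finType) (f : T -> T) (P : pred T).
Hypothesis finj : injective f.
Definition nxt d := head d [seq y <- traject f (f d) #|T| | P y].

Lemma head_filter (x0 : T) s : head x0 (filter P s) = nth x0 s (find P s).
Proof. by elim: s => //= a s IH; case: (P a). Qed.

Lemma order_le x : order f x <= #|T|.
Proof. exact: max_card. Qed.

Lemma nxt_spec d y : fconnect f d y -> P y -> exists k, [/\ k < #|T|,
  nxt d = iter k.+1 f d, P (iter k.+1 f d) & forall i, i < k -> ~~ P (iter i.+1 f d)].
Proof.
move=> Hc Py; set s := traject f (f d) #|T|.
have Hs : has P s.
  apply/hasP; exists y => //; apply/trajectP.
  have Hm := findex_max Hc; have Ho := order_le d.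
  case Em: (findex f d y) => [|m].
    exists (order f d).-1.
      by rewrite prednK ?order_gt0.
    by rewrite -iterSr prednK ?order_gt0 // iter_order // -(iter_findex Hc) Em.
  exists m; first by rewrite Em in Hm; apply: leq_trans Ho; apply: ltnW.
  by rewrite -iterSr -Em iter_findex.
have Hk : find P s < #|T| by rewrite -(size_traject f (f d) #|T|) -has_find.
exists (find P s); split => //.
- by rewrite /nxt -/s head_filter (set_nth_default (f d)) ?size_traject // nth_traject // iterSr.
- by rewrite iterSr -(nth_traject _ Hk) nth_find.
- move=> i Hi; rewrite iterSr -(nth_traject _ (ltn_trans Hi Hk)).
  by rewrite (before_find _ Hi).
Qed.

Lemma nxt_min d k : P (iter k.+1 f d) -> (forall i, i < k -> ~~ P (iter i.+1 f d)) ->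
  nxt d = iter k.+1 f d.
Proof.
move=> Pk Hmin; have [k' [_ -> Pk' Hmin']] := nxt_spec (fconnect_iter f k.+1 d) Pk.
case: (ltngtP k k') => [H|H|-> //].
  by have := Hmin' _ H; rewrite Pk.
by have := Hmin _ H; rewrite Pk'.
Qed.

Lemma nxt_rec d y : fconnect f d y -> P y -> nxt d = if P (f d) then f d else nxt (f d).
Proof.
move=> Hc Py; have [k [_ Ek Pk Hmin]] := nxt_spec Hc Py.
case Pf: (P (f d)).
  by rewrite (@nxt_min d 0) //.
case: k Ek Pk Hmin => [|k] Ek Pk Hmin; first by rewrite /= Pf in Pk.
rewrite Ek (@nxt_min (f d) k) -?iterSr //.
move=> i Hi; rewrite -iterSr; exact: Hmin.
Qed.

Lemma nxt_conn d y : fconnect f d y -> P y ->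
  [/\ fconnect f d (nxt d), P (nxt d) & exists k, nxt d = iter k.+1 f d].
Proof.
move=> Hc Py; have [k [_ Ek Pk _]] := nxt_spec Hc Py.
by rewrite Ek; split => //; [exact: fconnect_iter | exists k].
Qed.

Lemma nxt_neq x y : P y -> fconnect f x y -> y != x -> nxt x != x.
Proof.
move=> Py Hc Hyx; have [k [_ Ek Pk Hmin]] := nxt_spec Hc Py.
have Hj := findex_max Hc; have Ej := iter_findex Hc.
set j := findex f x y in Hj Ej.
have Hj0 : j != 0 by apply: contraNneq Hyx => Ej0; rewrite -Ej Ej0.
have Hkj : k.+1 <= j.
  rewrite leqNgt; apply/negP => H.
  have Hj1 : j.-1 < k by rewrite -ltnS prednK ?lt0n.
  by have := Hmin _ Hj1; rewrite prednK ?lt0n // Ej Py.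
rewrite Ek; apply/eqP => E.
have := findex_iter (leq_ltn_trans Hkj Hj).
by rewrite E findex0.
Qed.
End Nxt.
Section Main.
Variables (V E : finType) (h t : E -> V) (rot : E * bool -> E * bool) (c : seq E).
Hypotheses (Hrot : is_rotation h t rot) (Hhyp : hyperbolic rot)
  (Hc : simple_closed_path h t c).

Local Notation D := (E * bool)%type.
Definition PC : pred D := fun d => d.1 \in c.
Local Notation nx := (nxt rot PC).
Local Notation dv := (dvert h t).
Local Notation oC := (onC t c).

Lemma firstCE d : firstC rot c d = nx d. Proof. by []. Qed.

Lemma rinj : injective rot. Proof. by case: Hrot. Qed.
Lemma rdv d : dv (rot d) = dv d. Proof. by case: Hrot => _ H _; apply: H. Qed.
Lemma rconn d d' : dv d = dv d' -> fconnect rot d d'.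
Proof. by case: Hrot => _ _ H; apply: H. Qed.
Lemma iter_dv n d : dv (iter n rot d) = dv d.
Proof. by elim: n => //= n IH; rewrite rdv. Qed.
Lemma fconn_dv d d' : fconnect rot d d' -> dv d' = dv d.
Proof. by move=> H; rewrite -(iter_findex H) iter_dv. Qed.

Lemma uniq_tail e1 e2 : e1 \in c -> e2 \in c -> t e1 = t e2 -> e1 = e2.
Proof.
case: Hc => _ _; elim: c => //= a s IH /andP [Hn Hu].
rewrite !inE => /orP [/eqP -> | H1] /orP [/eqP -> | H2] //.
- move=> E2; case/negP: Hn; rewrite E2; exact: map_f.
- move=> E1; case/negP: Hn; rewrite -E1; exact: map_f.
- exact: IH.
Qed.

Lemma c_uniq : uniq c. Proof. by case: Hc => _ _ /map_uniq. Qed.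
Lemma c_cyc : cycle (fun e f => h e == t f) c. Proof. by case: Hc. Qed.

Lemma C_onC d : PC d -> oC (dv d).
Proof.
case: d => e [] He; rewrite /onC /dvert /=.
  have /eqP -> := next_cycle c_cyc He; apply: map_f; by rewrite mem_next.
exact: map_f.
Qed.

Lemma C_uniq d1 d2 : PC d1 -> PC d2 -> dv d1 = dv d2 -> d1.2 = d2.2 -> d1 = d2.
Proof.
case: d1 => e1 b1; case: d2 => e2 b2; rewrite /PC /= => H1 H2 Hv Hb; rewrite -Hb in Hv *.
case: b1 {Hb} Hv; rewrite /dvert /= => Hv; last by rewrite (uniq_tail H1 H2 Hv).
have /eqP E1 := next_cycle c_cyc H1; have /eqP E2 := next_cycle c_cyc H2.
have : next c e1 = next c e2.
  by apply: uniq_tail; rewrite ?mem_next // -E1 -E2.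
by move/(congr1 (prev c)); rewrite !prev_next ?c_uniq // => ->.
Qed.

Lemma C_exists v b : oC v -> exists d, [/\ PC d, dv d = v & d.2 = b].
Proof.
case/mapP => e He ->.
case: b.
  exists (prev c e, true); split => //=; first by rewrite /PC /= mem_prev.
  by have /eqP := prev_cycle c_cyc He.
by exists (e, false).
Qed.

Lemma orbC d : oC (dv d) -> exists y, fconnect rot d y /\ PC y.
Proof.
move=> H; have [y [Py Ey _]] := C_exists true H.
by exists y; split => //; apply: rconn.
Qed.

Lemma nxtC x : PC x -> [/\ PC (nx x), dv (nx x) = dv x & (nx x).2 = ~~ x.2].
Proof.
move=> Px; have [y [Py Ey By]] := C_exists (~~ x.2) (C_onC Px).
have Hxy : fconnect rot x y by apply: rconn.
have Hne : y != x by apply/eqP => HE; move: By; rewrite HE; case: (x.2).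
have Hn := nxt_neq rinj Py Hxy Hne.
have [Hc' Pn _] := nxt_conn rinj Hxy Py.
have Hv := fconn_dv Hc'; split => //.
have : (nx x).2 != x.2.
  by apply: contra Hn => /eqP Hb; apply/eqP; apply: C_uniq => //; congruence.
by case: ((nx x).2); case: (x.2).
Qed.

Lemma nx_rec d : oC (dv d) -> nx d = if PC (rot d) then rot d else nx (rot d).
Proof. by case/orbC => y [H Py]; apply: (nxt_rec rinj H Py). Qed.

Local Notation cD := (cutE c * bool)%type.
Definition lift (x : D) (s : bool) : cD := (mkE c x.1 s, x.2).
Definition sig (x : D) s := dside rot c x ((x.1 \in c) && s).
Local Notation crot := (cut_rot rot c).
Local Notation cdv := (dvert (cut_head h t rot c) (cut_tail t rot c)).

Lemma sigC x s : PC x -> sig x s = s.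
Proof. by rewrite /sig /dside /PC => ->. Qed.
Lemma sigN x s : ~~ PC x -> sig x s = (nx x).2.
Proof. by rewrite /sig /dside /PC => /negbTE ->. Qed.

Lemma lift_eq x1 s1 x2 s2 : x1 = x2 -> (PC x1 -> s1 = s2) -> lift x1 s1 = lift x2 s2.
Proof.
move=> <- H; rewrite /lift; congr pair; apply: val_inj => /=.
by case HE: (x1.1 \in c) => //=; rewrite H.
Qed.

Lemma lift_inj x1 s1 x2 s2 : lift x1 s1 = lift x2 s2 -> x1 = x2 /\ (PC x1 -> s1 = s2).
Proof.
case: x1 => e1 b1; case: x2 => e2 b2; rewrite /lift /= => H.
have := congr1 (fun X => val X.1) H; have := congr1 snd H => /= -> [E1 E2].
subst e2; split => // P1; rewrite /PC /= in P1; move: E2; by rewrite P1.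
Qed.

Lemma lift_surj (X : cD) : X = lift ((val X.1).1, X.2) (val X.1).2.
Proof.
case: X => [[[e s] /= Hs] b]; rewrite /lift /=; congr pair; apply: val_inj => /=.
by case: (e \in c) Hs; case: s.
Qed.

Definition ystep x s := if PC x && (x.2 == sig x s) then nx x else rot x.

Lemma crot_lift x s : crot (lift x s) = lift (ystep x s) (sig x s).
Proof. by case: x. Qed.

Lemma cdv_lift x s : cdv (lift x s) = mkV t c (dv x) (sig x s).
Proof. by case: x => e []. Qed.

Lemma mkV_congr v a b : (oC v -> a = b) -> mkV t c v a = mkV t c v b.
Proof. by move=> H; apply: val_inj => /=; case HE: (oC v) => //=; rewrite H. Qed.

Lemma mkV_inv v a v' a' : mkV t c v a = mkV t c v' a' -> v = v' /\ oC v && a = oC v' && a'.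
Proof. by move/(congr1 val) => /= [-> ->]. Qed.

Lemma ystep_dv x s : dv (ystep x s) = dv x.
Proof.
rewrite /ystep; case: ifP => [/andP [Px _] | _]; last exact: rdv.
by case: (nxtC Px).
Qed.

Lemma sig_step x s : oC (dv x) -> sig (ystep x s) (sig x s) = sig x s.
Proof.
move=> Hv; rewrite /ystep.
case Px: (PC x) => /=.
  rewrite (sigC s Px); case: ifP => Hb.
    by case: (nxtC Px) => P _ _; rewrite sigC.
  case Pr: (PC (rot x)); first by rewrite sigC.
  rewrite sigN ?Pr //; have := nx_rec Hv; rewrite Pr => <-.
  by case: (nxtC Px) => _ _ ->; move/negbT: Hb; case: (x.2); case: s.
case Pr: (PC (rot x)); first by rewrite sigC.
by rewrite !sigN ?Pr ?Px //; have := nx_rec Hv; rewrite Pr => <-.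
Qed.

Theorem cut_hyp : hyperbolic crot.
Proof.
move=> X; rewrite (lift_surj X); move: ((val X.1).1, X.2) (val X.1).2 => x s.
rewrite crot_lift /= /ystep; case: ifP => [/andP [Px _] | _]; last exact: Hhyp.
by case: (nxtC Px).
Qed.

Theorem cut_dv X : cdv (crot X) = cdv X.
Proof.
rewrite (lift_surj X); move: ((val X.1).1, X.2) (val X.1).2 => x s.
rewrite crot_lift !cdv_lift ystep_dv; apply: mkV_congr => Hv.
exact: sig_step.
Qed.

Lemma mixed x1 s1 x2 s2 : PC x1 -> x1.2 == sig x1 s1 ->
  ~~ (PC x2 && (x2.2 == sig x2 s2)) -> nx x1 = rot x2 -> sig x1 s1 = sig x2 s2 -> False.
Proof.
move=> P1 /eqP B1 N2 Ey Es.
have [Py _ By] := nxtC P1.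
rewrite (sigC _ P1) in B1 Es.
have Hr := Hhyp x2; rewrite -Ey By in Hr.
case P2: (PC x2).
  rewrite P2 /= (sigC _ P2) in N2 Es.
  move: N2 Hr; rewrite -Es -B1; case: (x1.2); case: (x2.2) => //.
have Hn2 : nx x2 = rot x2.
  have Py' : PC (rot x2) by rewrite -Ey.
  by rewrite (nxt_rec rinj (fconnect1 rot x2) Py') Py'.
rewrite (sigN _ (negbT P2)) Hn2 -Ey By in Es.
by move: Es; rewrite -B1; case: (x1.2).
Qed.

Theorem cut_inj : injective crot.
Proof.
move=> X1 X2; rewrite (lift_surj X1) (lift_surj X2).
move: ((val X1.1).1, X1.2) (val X1.1).2 ((val X2.1).1, X2.2) (val X2.1).2 => x1 s1 x2 s2.
rewrite !crot_lift => /lift_inj [Ey Es].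
move: Ey Es; rewrite /ystep.
case B1: (PC x1 && (x1.2 == sig x1 s1)); case B2: (PC x2 && (x2.2 == sig x2 s2)).
- move/andP: B1 => [P1 /eqP E1]; move/andP: B2 => [P2 /eqP E2] Ey _.
  have [_ V1 b1] := nxtC P1; have [_ V2 b2] := nxtC P2.
  have Ex : x1 = x2.
    apply: C_uniq => //; first by rewrite -V1 -V2 Ey.
    by apply: (can_inj negbK); rewrite -b1 -b2 Ey.
  apply: lift_eq => // _; subst x2; rewrite (sigC _ P1) in E1; rewrite (sigC _ P2) in E2.
  by rewrite -E1 -E2.
- move/andP: B1 => [P1 E1] Ey Es; exfalso.
  have [Py _ _] := nxtC P1.
  by apply: (mixed P1 E1 (negbT B2) Ey); apply: Es.
- move/andP: B2 => [P2 E2] Ey Es; exfalso.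
  have [Py _ _] := nxtC P2.
  by apply: (mixed P2 E2 (negbT B1) (esym Ey)); symmetry; apply: Es; rewrite Ey.
- move=> /rinj Ex _; apply: lift_eq => // P1; subst x2.
  rewrite P1 /= !(sigC _ P1) in B1 B2.
  by move: B1 B2; case: (x1.2); case: s1; case: s2.
Qed.

Lemma notC d : ~~ oC (dv d) -> ~~ PC d.
Proof. exact: contra (@C_onC d). Qed.

Lemma iter_crot_nonC n x s : ~~ oC (dv x) ->
  iter n crot (lift x s) = lift (iter n rot x) false.
Proof.
move=> Hv; elim: n => [|n IH] /=.
  by apply: lift_eq => // P; move: (notC Hv); rewrite P.
rewrite IH crot_lift /ystep.
have Nn : ~~ PC (iter n rot x) by apply: notC; rewrite iter_dv.
rewrite (negbTE Nn) /=; apply: lift_eq => // P.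
by move: (@notC (rot (iter n rot x))); rewrite P rdv iter_dv Hv => /(_ isT).
Qed.

Lemma walk k : forall x, ~~ PC x -> oC (dv x) -> nx x = iter k.+1 rot x ->
  fconnect crot (lift x false) (lift (nx x) (nx x).2).
Proof.
elim: k => [|k IH] x Nx Hv Ek; have Hr := nx_rec Hv;
  (have Hs : crot (lift x false) = lift (rot x) (nx x).2 by
     rewrite crot_lift /ystep (negbTE Nx) /= (sigN _ Nx)).
  by apply: connect1; apply/eqP; rewrite Hs Ek.
case Pr: (PC (rot x)).
  by rewrite Pr in Hr; apply: connect1; apply/eqP; rewrite Hs Hr.
rewrite Pr in Hr.
apply: (connect_trans (y:=lift (rot x) false)).
  by apply: connect1; apply/eqP; rewrite Hs; apply: lift_eq => //; rewrite Pr.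
rewrite Hr; apply: IH; rewrite ?Pr ?rdv //.
by rewrite -Hr Ek iterSr.
Qed.

Lemma reachC x s : PC x -> fconnect crot (lift x s) (lift (nx x) s).
Proof.
move=> Px; have Hv := C_onC Px; have [Pn _ Bn] := nxtC Px.
have Hr := nx_rec Hv.
case Hb: (x.2 == s).
  by apply: connect1; apply/eqP; rewrite crot_lift /ystep Px (sigC _ Px) Hb.
have Hs : crot (lift x s) = lift (rot x) s.
  by rewrite crot_lift /ystep Px (sigC _ Px) Hb.
case Pr: (PC (rot x)).
  by rewrite Pr in Hr; apply: connect1; apply/eqP; rewrite Hs Hr.
rewrite Pr in Hr.
apply: (connect_trans (y:=lift (rot x) false)).
  by apply: connect1; apply/eqP; rewrite Hs; apply: lift_eq => //; rewrite Pr.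
have Hv' : oC (dv (rot x)) by rewrite rdv.
have [y [Hy Py]] := orbC Hv'.
have [_ _ [k Ek]] := nxt_conn rinj Hy Py.
have := walk (negbT Pr) Hv' Ek.
by rewrite -Hr Bn; move/negbT: Hb {Hs}; case: (x.2); case: s.
Qed.

Lemma reach_some x s : oC (dv x) ->
  exists z, [/\ PC z, dv z = dv x & fconnect crot (lift x s) (lift z (sig x s))].
Proof.
move=> Hv; case Px: (PC x).
  by exists x; split => //; rewrite (sigC _ Px) connect0.
have [y [Hy Py]] := orbC Hv.
have [Hn Pn [k Ek]] := nxt_conn rinj Hy Py.
exists (nx x); split => //; first exact: fconn_dv.
rewrite (sigN _ (negbT Px)).
have -> : lift x s = lift x false by apply: lift_eq => //; rewrite Px.
exact: walk (negbT Px) Hv Ek.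
Qed.

Lemma C_both z w s : PC z -> PC w -> dv z = dv w -> fconnect crot (lift z s) (lift w s).
Proof.
move=> Pz Pw Hzw; case Hb: (w.2 == z.2).
  by rewrite (@C_uniq w z) ?connect0 //; apply/eqP.
have [Pn Vn Bn] := nxtC Pz.
rewrite (@C_uniq w (nx z)) ?Vn //; first exact: reachC.
by rewrite Bn; move/negbT: Hb; case: (w.2); case: (z.2).
Qed.

Theorem cut_conn X Y : cdv X = cdv Y -> fconnect crot X Y.
Proof.
rewrite (lift_surj X) (lift_surj Y).
move: ((val X.1).1, X.2) (val X.1).2 ((val Y.1).1, Y.2) (val Y.1).2 => x s y s'.
rewrite !cdv_lift => /mkV_inv [Ev Es].
case Hv: (oC (dv x)).
  rewrite -Ev Hv /= in Es.
  have [z [Pz Vz Hz]] := reach_some s Hv.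
  have Hv' : oC (dv y) by rewrite -Ev.
  have [z' [Pz' Vz' Hz']] := reach_some s' Hv'.
  apply: connect_trans Hz _.
  apply: connect_trans (C_both _ Pz Pz' _) _; first by rewrite Vz Vz'.
  by rewrite Es fconnect_sym //; apply: cut_inj.
have Hxy := rconn Ev.
rewrite -(iter_findex Hxy).
have -> : lift (iter (findex rot x y) rot x) s' = iter (findex rot x y) crot (lift x s).
  rewrite iter_crot_nonC ?Hv //; apply: lift_eq => // P.
  by move: (@notC (iter (findex rot x y) rot x)); rewrite P iter_dv Hv => /(_ isT).
exact: fconnect_iter.
Qed.
End Main.

Theorem proposition3p16 (V E : finType) (h t : E -> V)
    (rot : E * bool -> E * bool) (c : seq E) :
  is_rotation h t rot ->
  hyperbolic rot ->
  connected h t ->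
  simple_closed_path h t c ->
  is_rotation (cut_head h t rot c) (cut_tail t rot c) (cut_rot rot c)
  /\ hyperbolic (cut_rot rot c).
Proof.
move=> Hr Hh _ Hc; split; last exact: (cut_hyp Hr Hh Hc).
split; [exact: (cut_inj Hr Hh Hc) | exact: (cut_dv Hr Hc) | exact: (cut_conn Hr Hh Hc)].
Qed.
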